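(* Let $K\ge 1$ and $r$ be integers such that $K-r$ is a positive divisor of $K$, and put $g=\frac{K}{K-r}$. For integers $a,b$ write $(a)_b$ for $a \bmod b$. For $k\in[0,g)$ let $\mathcal{C}_k=\{(k+ig)_K : i\in[0,K-r)\}$. Consider the data shuffling problem (described in the context) with $K$ nodes $[0,K)$, $K$ messages $V_0,\dots,V_{K-1}$, where node $k$ wants $V_k$ and knows the messages with indices in $\mathcal{S}_k=[0,K)\setminus\{(k+ig)_K : i\in[0,K-r)\}$, and node $k$ broadcasts over a noiseless link of capacity $C_k\ge 0$. Then the capacity region of this problem equals $$\Big\{(R_k : k\in[0,K))\in\mathbb{R}_{+}^{K} \;:\; \sum_{i\in[0,K-r)} R_{(k+ig)_K} \le \sum_{j\in[0,K)\setminus \mathcal{C}_k} C_j \ \text{ for all } k\in[0,g)\Big\}.$$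
   Context: Notation: $[a,b)=\{a,a+1,\dots,b-1\}$ and $[n]=\{1,\dots,n\}$. Origin of the problem (MapReduce distributed computing): $N$ input files are split into $g$ disjoint batches $B_0,\dots,B_{g-1}$; node $k\in[0,K)$ stores every batch except $B_{(k)_g}$ and computes intermediate values of all output functions from its stored files. Each node $k$ is assigned a disjoint set $\mathcal{W}_k$ of output functions (all of equal size) and must obtain the message $V_k$, the concatenation of the intermediate values of the functions in $\mathcal{W}_k$ computed from the files of batch $B_{(k)_g}$. Thus node $k$ knows $V_j$ exactly when $(j)_g\neq(k)_g$, i.e. when $j\in\mathcal{S}_k=[0,K)\setminus\{(k+ig)_K: i\in[0,K-r)\}$. (Here $r$ is the computation load, the total number of batch copies stored divided by the number of batches.) Data shuffling code: the messages $V_k$, $k\in[0,K)$, are independent, with $V_k$ uniformly distributed on $[2^{nR_k}]$, where $n$ is the blocklength and $R_k\ge 0$ the rate. A $((2^{nR_k})_{k},(2^{nC_k})_k,n)$ code consists of an encoder at each node $k$ mapping the messages $(V_j: j\in\mathcal{S}_k)$ to a codeword $Y_k\in[2^{nC_k}]$ broadcast to all other nodes, and a decoder at each node $k$ mapping $(Y_j : j\in[0,K)\setminus\{k\})$ together with its side information $(V_j: j\in\mathcal{S}_k)$ to an estimate $\hat V_k$. The error probability is $P_e^{(n)}=\Pr[(\hat V_k)_k\neq (V_k)_k]$. A rate tuple $(R_k)_k$ is achievable for link capacities $(C_k)_k$ if there is a sequence of such codes with $P_e^{(n)}\to 0$ as $n\to\infty$; the capacity region is the closure of the set of achievable rate tuples.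 *)

(* Defs.v *)
From HB Require Import structures.
From mathcomp Require Import all_boot all_order all_algebra.
From mathcomp Require Import all_classical all_reals all_analysis.
Set Implicit Arguments. Unset Strict Implicit. Unset Printing Implicit Defensive.
Import Order.TTheory GRing.Theory Num.Theory.
Import numFieldNormedType.Exports.
Local Open Scope classical_set_scope.
Local Open Scope ring_scope.

Section Shuffling.
Variable K : nat.

(* [2^x] with x >= 0 : the set {0, ..., floor(2^x) - 1} of size floor(2^x) >= 1 *)
Definition msize {R : realType} (x : R) : nat := Num.truncn (powR 2 x).

Definition msg_t (M : 'I_K -> nat) := {dffun forall k : 'I_K, 'I_(M k)}.
Definition cw_t (L : 'I_K -> nat) := {dffun forall k : 'I_K, 'I_(L k)}.

Record code (S : 'I_K -> {set 'I_K}) (M L : 'I_K -> nat) := Code {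
  enc : forall k : 'I_K, msg_t M -> 'I_(L k);
  dec : forall k : 'I_K, cw_t L -> msg_t M -> 'I_(M k);
  enc_local : forall k (v v' : msg_t M),
     (forall j, j \in S k -> v j = v' j) -> enc k v = enc k v';
  dec_local : forall k (y y' : cw_t L) (v v' : msg_t M),
     (forall j, j != k -> y j = y' j) ->
     (forall j, j \in S k -> v j = v' j) -> dec k y v = dec k y' v'
}.

Definition codeword S M L (c : code S M L) (v : msg_t M) : cw_t L :=
  [ffun k => enc c k v].

(* error probability with independent uniform messages, i.e. uniform on msg_t M *)
Definition err_prob {R : realType} S M L (c : code S M L) : R :=
  (#|[set v : msg_t M | [exists k : 'I_K, dec c k (codeword c v) v != v k]]|%:R
   / #|{: msg_t M}|%:R).

Definition rate_sizes {R : realType} (Rt : 'rV[R]_K) (n : nat) : 'I_K -> nat :=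
  fun k => msize (n%:R * Rt ord0 k).

Definition achievable {R : realType} (S : 'I_K -> {set 'I_K})
    (Cap : 'rV[R]_K) (Rt : 'rV[R]_K) : Prop :=
  (forall k, 0 <= Rt ord0 k) /\
  exists codes : forall n : nat, code S (rate_sizes Rt n) (rate_sizes Cap n),
    (fun n => err_prob (codes n)) @ \oo --> (0 : R).

Definition capacity_region {R : realType} (S : 'I_K -> {set 'I_K})
    (Cap : 'rV[R]_K) : set 'rV[R]_K :=
  closure [set Rt | achievable S Cap Rt].

Definition Cset (r g k : nat) : {set 'I_K} :=
  [set j : 'I_K | [exists i : 'I_(K - r), nat_of_ord j == ((k + i * g) %% K)%N]].

Definition side_info (r g : nat) (k : 'I_K) : {set 'I_K} := ~: Cset r g k.

(* entry of a row vector indexed by a natural number (0 outside [0,K)) *)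
Definition at_nat {R : realType} (v : 'rV[R]_K) (m : nat) : R :=
  if insub m is Some i then v ord0 i else 0.

End Shuffling.

(* Main.v *)
Require Import Defs.
From HB Require Import structures.
From mathcomp Require Import all_boot all_order all_algebra.
From mathcomp Require Import all_classical all_reals all_analysis.
From mathcomp Require Import zify ring lra.
Import Order.TTheory GRing.Theory Num.Theory.
Import numFieldNormedType.Exports.
Lemma csetP (K g d k j : nat) : (K = g*d -> 0<g -> 0<d -> j < K ->
  (exists2 i, i < d & (k + i*g) %% K = j) <-> j %% g = k %% g)%N.
Proof.
move=> eK g0 d0 jK; split.
- case=> i id <-.
  have gK : g %| K by rewrite eK dvdn_mulr.
  by rewrite modn_dvdm // addnC modnMDl.
- move=> ejk.
  have ek := divn_eq k g; have ej := divn_eq j g.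
  set a := k %/ g in ek *; set b := j %/ g in ej *.
  have bd : (b < d)%N by rewrite ltn_divLR // mulnC -eK.
  exists ((b + (d - a %% d)) %% d); first exact: ltn_pmod.
  set i := (b + (d - a %% d)) %% d.
  have ai : ((a + i) %% d = b)%N.
    rewrite /i modnDmr.
    have ad : (a %% d < d)%N := ltn_pmod a d0.
    have -> : (a + (b + (d - a %% d)) = (a %/ d) * d + (b + d))%N.
      by rewrite {1}(divn_eq a d); lia.
    by rewrite modnMDl modnDr modn_small.
  have ea := divn_eq (a + i) d; rewrite ai in ea.
  set t := (a + i) %/ d in ea.
  have -> : (k + i * g = t * K + j)%N.
    rewrite eK ek ej ejk. nia.
  by rewrite modnMDl modn_small.
Qed.

Lemma foldr_prod (T : finType) (F : T -> nat) :
  foldr muln 1%N [seq F x | x : T] = (\prod_(x : T) F x)%N.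
Proof. by rewrite foldrE big_image. Qed.

Lemma card_msg K (M : 'I_K -> nat) : #|{: msg_t M}| = (\prod_j M j)%N.
Proof. by rewrite /msg_t card_dep_ffun foldr_prod; apply: eq_bigr => j _; rewrite card_ord. Qed.

Section Conv.
Variables (K : nat) (S : 'I_K -> {set 'I_K}) (M L : 'I_K -> nat) (c : Defs.code S M L).
Variable C : {set 'I_K}.
Hypothesis hS : forall i, i \in C -> S i = ~: C.

Definition goodC := [set v : msg_t M | [forall i in C, dec c i (codeword c v) v == v i]].

Definition psiT (j : 'I_K) := option ('I_(M j) * 'I_(L j)).

Definition psi (v : msg_t M) : {dffun forall j : 'I_K, psiT j} :=
  finfun (fun j => if j \in C then None else Some (v j, codeword c v j)).

Lemma card_goodC : (#|goodC| <= \prod_(j in ~: C) (M j * L j))%N.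
Proof.
pose F := fun j : 'I_K => [pred o : psiT j | (o == None) == (j \in C)].
have cF : #|(family F : simpl_pred {dffun forall j : 'I_K, psiT j})| = (\prod_(j in ~: C) (M j * L j))%N.
  rewrite card_family foldr_prod (bigID (fun j => j \in C)) /=.
  rewrite big1 ?mul1n; last first.
    move=> j jC; rewrite -(card1 (None : psiT j)); apply: eq_card => o.
    by rewrite !inE jC; case: o.
  rewrite [RHS](eq_bigl (fun j => j \notin C)); last by move=> j; rewrite inE.
  apply: eq_bigr => j jC.
  have -> : #|F j| = #|predC1 (None : psiT j)|.
    by apply: eq_card => o; rewrite !inE (negbTE jC); case: o.
  by rewrite cardC1 card_option /= card_prod !card_ord.
have sub : psi @: goodC \subset (family F : simpl_pred _).
  apply/fintype.subsetP => _ /imsetP [v _ ->]; apply/familyP => j.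
  by rewrite /psi ffunE !inE; case: (j \in C).
rewrite -cF -(card_in_imset (f := psi)); first exact: subset_leq_card.
move=> v v'; rewrite !inE => /forall_inP gv /forall_inP gv' eqp.
have agr : forall j, j \notin C -> v j = v' j /\ codeword c v j = codeword c v' j.
  move=> j jC; move/ffunP: eqp => /(_ j); rewrite /psi !ffunE (negbTE jC).
  by case=> -> ->.
have ecw : codeword c v = codeword c v'.
  apply/ffunP => j; case: (boolP (j \in C)) => jC; last by case: (agr j jC).
  rewrite /codeword !ffunE; apply: enc_local => i; rewrite hS // inE.
  by move=> /agr [].
apply/ffunP => i; case: (boolP (i \in C)) => iC; last by case: (agr i iC).
rewrite -(eqP (gv i iC)) -(eqP (gv' i iC)) ecw; apply: dec_local => // j.
by rewrite hS // inE => /agr [].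
Qed.

End Conv.

Lemma card_restr (I : finType) (T : I -> finType) (D : pred I) (df : forall j, T j) :
  #|[set f : {dffun forall j, T j} | [forall j, (j \notin D) ==> (f j == df j)]]|
  = (\prod_(j | D j) #|T j|)%N.
Proof.
pose F := fun j => [pred x : T j | (j \notin D) ==> (x == df j)].
transitivity (\prod_j #|F j|)%N.
  rewrite -foldr_prod -card_family.
  apply: eq_card => f; rewrite finset.in_set. apply: eq_forallb => j.
  by rewrite !inE.
rewrite (bigID D) /= [X in (_ * X)%N]big1 ?muln1.
  apply: eq_bigr => j jD; apply: eq_card => x.
  by rewrite !inE /=; apply/implyP => /negP [].
move=> j jD; rewrite -(card1 (df j)); apply: eq_card => x.
have jD2 : (j \in D) = false by exact: negbTE jD.
by rewrite !inE /= jD2.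

Qed.

Lemma modn_sub_cancel (a s L : nat) : (a < L -> ((a + s) %% L + (L - s %% L)) %% L = a)%N.
Proof.
move=> aL.
have L0 : (0 < L)%N by lia.
have sL : (s %% L < L)%N := ltn_pmod s L0.
rewrite modnDml {1}(divn_eq s L).
have -> : (a + (s %/ L * L + s %% L) + (L - s %% L) = s %/ L * L + (a + L))%N by lia.
by rewrite modnMDl modnDr modn_small.
Qed.

Section Achieve.
Variables (K g : nat) (cls : 'I_K -> 'I_g) (S : 'I_K -> {set 'I_K}) (M L : 'I_K -> nat).
Hypothesis hS : forall j i, (i \in S j) = (cls i != cls j).
Hypothesis Mpos : forall j, (0 < M j)%N.
Hypothesis Lpos : forall j, (0 < L j)%N.
Hypothesis hprod : forall k : 'I_g,
  (\prod_(i | cls i == k) M i <= \prod_(j | cls j != k) L j)%N.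

Definition defM j : 'I_(M j) := Ordinal (Mpos j).
Definition defL j : 'I_(L j) := Ordinal (Lpos j).
Definition v0 : msg_t M := finfun defM.
Definition w0 : cw_t L := finfun defL.

Definition restr (k : 'I_g) (v : msg_t M) : msg_t M :=
  finfun (fun j => if cls j == k then v j else defM j).
Definition Pk (k : 'I_g) : {set msg_t M} :=
  [set v : msg_t M | [forall j, (j \notin [pred i | cls i == k]) ==> (v j == defM j)]].
Definition Wk (k : 'I_g) : {set cw_t L} :=
  [set w : cw_t L | [forall j, (j \notin [pred i | cls i != k]) ==> (w j == defL j)]].

Lemma card_Pk k : #|Pk k| = (\prod_(i | cls i == k) M i)%N.
Proof.
rewrite /Pk card_restr; apply: eq_bigr => i _; exact: card_ord.
Qed.
Lemma card_Wk k : #|Wk k| = (\prod_(i | cls i != k) L i)%N.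
Proof.
rewrite /Wk card_restr; apply: eq_bigr => i _; exact: card_ord.
Qed.

Definition fk (k : 'I_g) (v : msg_t M) : cw_t L :=
  nth w0 (enum (Wk k)) (index (restr k v) (enum (Pk k))).
Definition ginv (k : 'I_g) (w : cw_t L) : msg_t M :=
  nth v0 (enum (Pk k)) (index w (enum (Wk k))).

Lemma restr_in k v : restr k v \in Pk k.
Proof.
rewrite inE; apply/forallP => j; rewrite /restr ffunE inE.
by case: (cls j == k).
Qed.

Lemma fkK k v : ginv k (fk k v) = restr k v.
Proof.
have iP : (index (restr k v) (enum (Pk k)) < size (enum (Pk k)))%N.
  by rewrite index_mem mem_enum restr_in.
have iW : (index (restr k v) (enum (Pk k)) < size (enum (Wk k)))%N.
  apply: (leq_trans iP); rewrite -!cardE card_Pk card_Wk; exact: hprod.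
rewrite /ginv /fk index_uniq ?enum_uniq //.
by rewrite nth_index // mem_enum restr_in.
Qed.

Lemma fk_in k v : fk k v \in Wk k.
Proof.
have iP : (index (restr k v) (enum (Pk k)) < size (enum (Pk k)))%N.
  by rewrite index_mem mem_enum restr_in.
have iW : (index (restr k v) (enum (Pk k)) < size (enum (Wk k)))%N.
  apply: (leq_trans iP); rewrite -!cardE card_Pk card_Wk; exact: hprod.
by rewrite /fk -mem_enum mem_nth.
Qed.

Lemma restr_local k (v v' : msg_t M) j :
  (forall i, i \in S j -> v i = v' i) -> k != cls j -> restr k v = restr k v'.
Proof.
move=> hv kj; apply/ffunP => i; rewrite /restr !ffunE.
case: eqP => // ik; apply: hv; rewrite hS ik //.
Qed.

Definition encA (j : 'I_K) (v : msg_t M) : 'I_(L j) :=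
  Ordinal (ltn_pmod (\sum_(k : 'I_g | k != cls j) (fk k v j : nat)) (Lpos j)).

Definition wdec (ki : 'I_g) (y : cw_t L) (v : msg_t M) : cw_t L :=
  finfun (fun j => if cls j == ki then defL j else
    Ordinal (ltn_pmod (y j + (L j - (\sum_(k : 'I_g | (k != cls j) && (k != ki)) (fk k v j : nat)) %% L j)) (Lpos j))).

Definition decA (i : 'I_K) (y : cw_t L) (v : msg_t M) : 'I_(M i) :=
  ginv (cls i) (wdec (cls i) y v) i.

Lemma encA_local j (v v' : msg_t M) :
  (forall i, i \in S j -> v i = v' i) -> encA j v = encA j v'.
Proof.
move=> hv; apply: val_inj => /=; congr (_ %% _); apply: eq_bigr => k kj.
by rewrite /fk (restr_local _ _ _ _ hv kj).
Qed.

Lemma decA_local i (y y' : cw_t L) (v v' : msg_t M) :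
  (forall j, j != i -> y j = y' j) ->
  (forall j, j \in S i -> v j = v' j) -> decA i y v = decA i y' v'.
Proof.
move=> hy hv; rewrite /decA; congr (ginv _ _ i); apply/ffunP => j; rewrite !ffunE.
case: eqP => // cj; apply: val_inj => /=.
have ji : j != i by apply/eqP => eji; apply: cj; rewrite eji.
rewrite hy //; congr (_ %% _); congr (_ + (_ - _ %% _)); apply: eq_bigr => k /andP [_ ki].
by rewrite /fk (restr_local _ _ _ _ hv ki).
Qed.

Definition codeA : Defs.code S M L := Code encA_local decA_local.

Lemma codeA_correct (v : msg_t M) i : dec codeA i (codeword codeA v) v = v i.
Proof.
rewrite /= /decA.
have -> : wdec (cls i) (codeword codeA v) v = fk (cls i) v.
  apply/ffunP => j; rewrite /wdec ffunE.
  case: eqP => cj.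
    have := fk_in (cls i) v; rewrite inE => /forallP /(_ j); rewrite inE cj eqxx /=.
    by move/eqP ->.
  apply: val_inj => /=; rewrite /codeword ffunE /= /encA /=.
  rewrite (bigD1 (cls i)) /=; last by apply/eqP => e; apply: cj; rewrite e.
  by rewrite modn_sub_cancel.
by rewrite fkK /restr ffunE eqxx.
Qed.
End Achieve.

Local Open Scope ring_scope.
Lemma closure_approx (R : realType) K (A : set 'rV[R]_K) x :
  closure A x <-> forall e : R, 0 < e -> exists y, A y /\ forall k, `|x ord0 k - y ord0 k| < e.
Proof.
split.
- move=> cl e e0.
  have := cl (ball x e) (nbhsx_ballx x _ e0).
  case=> y [Ay bxy]; exists y; split => // k.
  by case: bxy => _ /(_ ord0 k); rewrite /ball /=.
- move=> H B /nbhs_ballP [e /= e0 sB].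
  have [y [Ay hy]] := H e e0.
  exists y; split => //; apply: sB; split => // i j.
  rewrite /ball /= (ord1 i); exact: hy.
Qed.


Section RealFacts.
Variable R : realType.

Lemma pow2E (x : R) : powR 2 x = expR (x * ln 2).
Proof. by rewrite /powR pnatr_eq0. Qed.

Lemma ln2_gt0 : 0 < ln (2 : R).
Proof. by apply: ln_gt0; rewrite ltr1n. Qed.

Lemma pow2_ge1 (x : R) : 0 <= x -> 1 + x * ln 2 <= powR 2 x.
Proof. by move=> x0; rewrite pow2E expR_ge1Dx. Qed.

Lemma pow2_ge1' (x : R) : 0 <= x -> 1 <= powR 2 x.
Proof.
move=> x0; apply: le_trans (pow2_ge1 _ x0).
by rewrite lerDl mulr_ge0 // ltW // ln2_gt0.
Qed.

Lemma msize_gt0 (x : R) : 0 <= x -> (0 < msize x)%N.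
Proof. by move=> x0; rewrite /msize truncn_gt0 pow2_ge1'. Qed.

Lemma msize_le (x : R) : (msize x)%:R <= powR 2 x.
Proof. by rewrite /msize truncn_le powR_ge0. Qed.

Lemma msize_ge (x : R) : 0 <= x -> powR 2 x <= 2 * (msize x)%:R.
Proof.
move=> x0; have := truncnS_gt (powR 2 x); rewrite -/(msize x) => h.
apply: ltW; apply: (lt_le_trans h).
have := msize_gt0 _ x0; rewrite -[(msize x).+1]addn1 natrD mulr2n mulrDl mul1r.
by rewrite lerD2l ler1n.
Qed.

Lemma pow2_sum (I : finType) (P : pred I) (x : I -> R) :
  powR 2 (\sum_(i | P i) x i) = \prod_(i | P i) powR 2 (x i).
Proof.
rewrite pow2E mulr_suml expR_sum; apply: eq_bigr => i _; by rewrite pow2E.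
Qed.

Lemma pow2D (x y : R) : powR 2 (x + y) = powR 2 x * powR 2 y.
Proof. by rewrite !pow2E mulrDl expRD. Qed.

Lemma prod_msize_le K (P : pred 'I_K) (x : 'I_K -> R) :
  (\prod_(i | P i) msize (x i))%:R <= powR 2 (\sum_(i | P i) x i).
Proof.
rewrite natr_prod pow2_sum; apply: ler_prod => i _.
by rewrite ler0n msize_le.
Qed.

Lemma prod_msize_ge K (P : pred 'I_K) (x : 'I_K -> R) :
  (forall i, 0 <= x i) ->
  powR 2 (\sum_(i | P i) x i) <= 2 ^+ K * (\prod_(i | P i) msize (x i))%:R.
Proof.
move=> x0; rewrite pow2_sum natr_prod.
apply: (@le_trans _ _ (\prod_(i | P i) (2 * (msize (x i))%:R))).
  by apply: ler_prod => i _; rewrite powR_ge0 msize_ge ?x0.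
rewrite big_split /= ler_wpM2r //; first by apply: prodr_ge0 => i _; rewrite ler0n.
rewrite big_mkcond /= (_ : 2 ^+ K = \prod_(i < K) (2:R)); last by rewrite prodr_const card_ord.
apply: ler_prod => i _; case: (P i) => /=; rewrite ?lexx ?ler0n ?ler1n ?ler01 //.
Qed.

Lemma pow2_large (eta B : R) : 0 < eta ->
  exists N : nat, forall n : nat, (N <= n)%N -> B <= powR 2 (n%:R * eta).
Proof.
move=> eta0; exists (Num.truncn (B / (eta * ln 2))).+1 => n Nn.
have l0 := ln2_gt0.
apply: le_trans (pow2_ge1 _ _); last by rewrite mulr_ge0 // ltW.
have h := truncnS_gt (B / (eta * ln 2)).
have h2 : B / (eta * ln 2) < n%:R.
  by apply: (lt_le_trans h); rewrite ler_nat.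
have e0 : 0 < eta * ln (2:R) by rewrite mulr_gt0.
move: h2; rewrite ltr_pdivrMr // => h3.
rewrite -mulrA; apply: ltW; apply: (lt_le_trans h3); by rewrite lerDr.
Qed.
End RealFacts.

Lemma card_mkset (T : finType) (b : pred T) :
  #|mem (mkset (fun x => is_true (b x)))| = #|[set x | b x]%SET|.
Proof.
apply: eq_card => x; rewrite finset.in_set; apply/idP/idP; rewrite in_setE //.
Qed.

Section Main.
Variables (R : realType) (K r : nat).
Hypotheses (hK : (1 <= K)%N) (hr : (r < K)%N) (hdiv : ((K - r) %| K)%N).
Variables (Cap : 'rV[R]_K).
Hypothesis hCap : forall k, 0 <= Cap ord0 k.

Let d := (K - r)%N.
Let g := (K %/ d)%N.
Lemma d_gt0 : (0 < d)%N. Proof. rewrite /d; lia. Qed.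
Lemma Kgd : K = (g * d)%N. Proof. by rewrite /g divnK. Qed.
Lemma g_gt0 : (0 < g)%N.
Proof. rewrite /g divn_gt0 ?d_gt0 // /d; lia. Qed.

Lemma Cset_res (k : nat) (j : 'I_K) :
  (j \in Cset K r g k) = (j %% g == k %% g)%N.
Proof.
rewrite inE; apply/existsP/eqP.
  case=> i /eqP ji; apply/(@csetP K g d k j Kgd g_gt0 d_gt0 (ltn_ord j)).
  by exists i => //; rewrite ji.
move/(@csetP K g d k j Kgd g_gt0 d_gt0 (ltn_ord j)) => [i id eij].
by exists (Ordinal id); rewrite eij.
Qed.

Definition cls (j : 'I_K) : 'I_g := Ordinal (ltn_pmod j g_gt0).

Lemma hS_side (j i : 'I_K) : (i \in side_info r g j) = (cls i != cls j).
Proof. by rewrite /side_info inE Cset_res. Qed.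

Lemma Cset_cls (k : 'I_g) : Cset K r g k = [set j | cls j == k]%SET.
Proof.
apply/setP => j; rewrite Cset_res inE (modn_small (ltn_ord k)).
by apply/eqP/eqP => [e|<-]; [apply: val_inj|].
Qed.

Lemma sum_Cset (F : 'rV[R]_K) (k : nat) :
  \sum_(i < K - r) at_nat F ((k + i * g) %% K)%N = \sum_(j in Cset K r g k) F ord0 j.
Proof.
pose h (i : 'I_d) : 'I_K := Ordinal (ltn_pmod (k + i * g) hK).
have hinj : injective h.
  move=> i i' /(congr1 val) /= /eqP; rewrite eqn_modDl.
  have lt (x : 'I_d) : (x * g < K)%N by rewrite Kgd mulnC ltn_pmul2l ?g_gt0.
  rewrite !modn_small // eqn_pmul2r ?g_gt0 // => /eqP; exact: val_inj.
have eC : Cset K r g k = (h @: [set: 'I_d])%SET.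
  apply/setP => j; rewrite inE; apply/existsP/imsetP.
    by case=> i /eqP ji; exists i => //; apply: val_inj.
  by case=> i _ ->; exists i.
rewrite eC big_imset /=; last by move=> x y _ _; exact: hinj.
rewrite [RHS](eq_bigl xpredT); last by move=> x; rewrite inE.
apply: eq_bigr => i _.
by rewrite /at_nat (_ : ((k + i * g) %% K)%N = val (h i)) // valK.
Qed.

Lemma conv_bound (Rt : 'rV[R]_K) (R0 : forall j, 0 <= Rt ord0 j) (k : 'I_g) (n : nat)
  (c : Defs.code (side_info r g) (rate_sizes Rt n) (rate_sizes Cap n))
  (hgap : 2 ^+ K.+1 * powR 2 (n%:R * \sum_(j | cls j != k) Cap ord0 j)
          <= powR 2 (n%:R * \sum_(j | cls j == k) Rt ord0 j)) :
  (2^-1 : R) <= err_prob c.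
Proof.
set M := rate_sizes Rt n; set L := rate_sizes Cap n.
set C := [set j | cls j == k]%SET.
have hS' : forall i, i \in C -> side_info r g i = ~: C.
  move=> i; rewrite inE => /eqP ci; apply/setP => j.
  by rewrite hS_side !inE ci.
have G := @card_goodC _ _ _ _ c C hS'.
have key : (2 * \prod_(j in ~: C) L j <= \prod_(j in C) M j)%N.
  rewrite -(ler_nat R) natrM.
  have e1 : \sum_(j in ~: C) n%:R * Cap ord0 j = n%:R * \sum_(j | cls j != k) Cap ord0 j.
    by rewrite mulr_sumr; apply: eq_bigl => j; rewrite !inE.
  have e2 : \sum_(j in C) n%:R * Rt ord0 j = n%:R * \sum_(j | cls j == k) Rt ord0 j.
    by rewrite mulr_sumr; apply: eq_bigl => j; rewrite !inE.
  have h1 := @prod_msize_le R K (fun j => j \in ~: C) (fun j => n%:R * Cap ord0 j).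
  have h2 := @prod_msize_ge R K (fun j => j \in C) (fun j => n%:R * Rt ord0 j)
     (fun j => mulr_ge0 (ler0n _ _) (R0 j)).
  rewrite /= e1 in h1; rewrite /= e2 in h2.
  have K0 : 0 < (2:R) ^+ K by rewrite exprn_gt0.
  rewrite -(ler_pM2l K0).
  apply: le_trans h2; apply: le_trans hgap.
  rewrite exprSr -mulrA ler_pM2l // ler_pM2l //.
have cm : #|{: msg_t M}| = (\prod_(j in C) M j * \prod_(j in ~: C) M j)%N.
  rewrite card_msg (bigID (fun j => j \in C)) /=; congr (_ * _).
  by apply: eq_bigl => j; rewrite finset.in_setC.
have G2 : (#|@goodC _ _ _ _ c C| <= \prod_(j in ~: C) M j * \prod_(j in ~: C) L j)%N.
  by rewrite -big_split.
set bad := [set v : msg_t M | [exists i, dec c i (codeword c v) v != v i]]%SET.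
have sub : ~: bad \subset @goodC _ _ _ _ c C.
  apply/fintype.subsetP => v; rewrite !inE negb_exists => /fintype.forallP h.
  by apply/forall_inP => i _; have := h i; rewrite negbK.
have cb := cardsC bad.
have scard := subset_leq_card sub.
have hm : (#|{: msg_t M}| <= 2 * #|bad|)%N.
  move: G2 key cm cb scard; set A := (\prod_(j in ~: C) M j)%N; set B := (\prod_(j in ~: C) L j)%N.
  set D := (\prod_(j in C) M j)%N; set gc := #|@goodC _ _ _ _ c C|.
  move=> G2 key cm cb scard; rewrite cm.
  have cb2 : (#|bad| + #|~: bad| = D * A)%N by rewrite cb; exact: cm.
  clear cb cm; nia.
rewrite /err_prob (@card_mkset _ (fun v : msg_t M => [exists i, dec c i (codeword c v) v != v i])).
have m0 : (0 < #|{: msg_t M}|)%N.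
  by apply/card_gt0P; exists (finfun (fun j => Ordinal (@msize_gt0 R _ (mulr_ge0 (ler0n R n) (R0 j)))) : msg_t M).
rewrite -/bad ler_pdivlMr ?ltr0n //.
move: hm; rewrite -(ler_nat R) natrM => hm.
lra.
Qed.

Lemma converse (Rt : 'rV[R]_K) : achievable (side_info r g) Cap Rt ->
  forall k : 'I_g, \sum_(j | cls j == k) Rt ord0 j <= \sum_(j | cls j != k) Cap ord0 j.
Proof.
case=> R0 [codes hc] k; rewrite leNgt; apply/negP => hlt.
set SR := \sum_(j | cls j == k) Rt ord0 j in hlt *.
set SC := \sum_(j | cls j != k) Cap ord0 j in hlt *.
have eta0 : 0 < SR - SC by rewrite subr_gt0.
have [N HN] := @pow2_large R _ (2 ^+ K.+1) eta0.
have h2 : (0:R) < 2^-1 by rewrite invr_gt0.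
have := cvgr_lt _ hc _ h2; case=> N' _ HN'.
set n := maxn N N'.
have hgap : 2 ^+ K.+1 * powR 2 (n%:R * SC) <= powR 2 (n%:R * SR).
  have -> : n%:R * SR = n%:R * SC + n%:R * (SR - SC) by ring.
  rewrite pow2D mulrC ler_wpM2l ?powR_ge0 //; apply: HN; exact: leq_maxl.
have := conv_bound _ R0 _ _ (codes n) hgap.
have := HN' n (leq_maxr _ _) => /= lt1 le1.
by have := lt_le_trans lt1 le1; rewrite ltxx.
Qed.

Lemma err_zero (M L : 'I_K -> nat) (c : Defs.code (side_info r g) M L)
  (hc : forall v i, dec c i (codeword c v) v = v i) : err_prob c = (0 : R).
Proof.
rewrite /err_prob (@card_mkset _ (fun v : msg_t M => [exists i, dec c i (codeword c v) v != v i])).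
have -> : #|[set v : msg_t M | [exists i, dec c i (codeword c v) v != v i]]%SET| = 0%N.
  apply/eqP; rewrite cards_eq0; apply/eqP/setP => v; rewrite !inE.
  apply/negbTE; rewrite negb_exists; apply/fintype.forallP => i; by rewrite negbK hc.
by rewrite mul0r.
Qed.

Lemma achieve_of (Rt : 'rV[R]_K) (R0 : forall j, 0 <= Rt ord0 j) (N : nat)
  (hN : forall n, (N <= n)%N -> forall k : 'I_g,
     (\prod_(i | cls i == k) rate_sizes Rt n i <= \prod_(j | cls j != k) rate_sizes Cap n j)%N) :
  achievable (side_info r g) Cap Rt.
Proof.
split => //.
have ex : forall n, exists c : Defs.code (side_info r g) (rate_sizes Rt n) (rate_sizes Cap n),
    (N <= n)%N -> err_prob c = (0:R).
  move=> n.
  have Mpos : forall j, (0 < rate_sizes Rt n j)%N.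
    by move=> j; apply: msize_gt0; rewrite mulr_ge0.
  have Lpos : forall j, (0 < rate_sizes Cap n j)%N.
    by move=> j; apply: msize_gt0; rewrite mulr_ge0.
  case: (leqP N n) => Nn.
    exists (@codeA K g cls (side_info r g) _ _ hS_side Mpos Lpos) => _.
    by apply: err_zero => v i; exact: (@codeA_correct K g cls _ _ _ hS_side Mpos Lpos (hN n Nn) v i).
  exists (@Code _ _ _ _ (fun k _ => Ordinal (Lpos k)) (fun k _ _ => Ordinal (Mpos k))
     (fun _ _ _ _ => erefl) (fun _ _ _ _ _ _ _ => erefl)).
  by move=> Nn'; exfalso; move: Nn Nn'; lia.
exists (fun n => proj1_sig (cid (ex n))).
apply: cvg_near_cst.
exists N => // n /= Nn; exact: (proj2_sig (cid (ex n)) Nn).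
Qed.

Lemma msize0 : msize (0 : R) = 1%N.
Proof. by rewrite /msize powRr0 truncn1. Qed.

Lemma approx (Rt : 'rV[R]_K) (R0 : forall j, 0 <= Rt ord0 j)
  (hreg : forall k : 'I_g, \sum_(j | cls j == k) Rt ord0 j <= \sum_(j | cls j != k) Cap ord0 j)
  (e : R) (e0 : 0 < e) :
  exists Rt', achievable (side_info r g) Cap Rt' /\ forall j, `|Rt ord0 j - Rt' ord0 j| < e.
Proof.
set del := e / 2.
have del0 : 0 < del by rewrite divr_gt0.
pose Rt' : 'rV[R]_K := \row_j (if del < Rt ord0 j then Rt ord0 j - del else 0).
have R'E j : Rt' ord0 j = if del < Rt ord0 j then Rt ord0 j - del else 0 by rewrite mxE.
have R'0 j : 0 <= Rt' ord0 j.
  by rewrite R'E; case: ifP => // h; rewrite subr_ge0 ltW.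
have R'le j : Rt' ord0 j <= Rt ord0 j.
  by rewrite R'E; case: ifP => h; [rewrite lerBlDr lerDl ltW | exact: R0].
exists Rt'; split; last first.
  move=> j; rewrite R'E; case: ifP => h.
    by rewrite opprB addrC subrK ger0_norm ?ltW //; rewrite /del; lra.
  rewrite subr0 ger0_norm ?R0 //; move/negbT: h; rewrite -leNgt /del => h; lra.
have [N HN] := @pow2_large R _ (2 ^+ K) del0.
apply: (@achieve_of Rt' R'0 N) => n Nn k.
case: (boolP [exists i, (cls i == k) && (del < Rt ord0 i)]).
  case/existsP => i /andP [ci hi].
  have hs : \sum_(j | cls j == k) Rt' ord0 j <= \sum_(j | cls j == k) Rt ord0 j - del.
    rewrite (bigD1 i ci) [X in _ <= X - _](bigD1 i ci) /=.
    have -> : Rt' ord0 i = Rt ord0 i - del by rewrite R'E hi.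
    have : \sum_(j | (cls j == k) && (j != i)) Rt' ord0 j <= \sum_(j | (cls j == k) && (j != i)) Rt ord0 j.
      by apply: ler_sum => j _.
    lra.
  rewrite -(ler_nat R).
  have h1 := @prod_msize_le R K (fun j => cls j == k) (fun j => n%:R * Rt' ord0 j).
  have h2 := @prod_msize_ge R K (fun j => cls j != k) (fun j => n%:R * Cap ord0 j)
     (fun j => mulr_ge0 (ler0n _ _) (hCap j)).
  rewrite -mulr_sumr /= in h1; rewrite -mulr_sumr /= in h2.
  have K0 : 0 < (2:R) ^+ K by rewrite exprn_gt0.
  rewrite -(ler_pM2l K0); apply: le_trans h2.
  apply: le_trans (ler_wpM2l (ltW K0) h1) _.
  set SC := \sum_(j | cls j != k) Cap ord0 j.
  have hk := hreg k; rewrite -/SC in hk.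
  have -> : n%:R * SC = n%:R * (SC - del) + n%:R * del by ring.
  rewrite pow2D mulrC.
  apply: ler_pM; rewrite ?powR_ge0 ?exprn_ge0 //; last exact: HN.
  apply: ler_powR; first by rewrite ler1n.
  apply: ler_wpM2l; first exact: ler0n.
  lra.
rewrite negb_exists => /fintype.forallP h.
rewrite big1 => [|i ci].
  by rewrite prodn_gt0 // => j; apply: msize_gt0; rewrite mulr_ge0.
rewrite /rate_sizes R'E; have := h i; rewrite ci /= => /negbTE ->.
by rewrite mulr0 msize0.
Qed.

Lemma region_iff (Rt : 'rV[R]_K) :
  (forall k : nat, (k < g)%N ->
     \sum_(i < K - r) at_nat Rt ((k + i * g) %% K)%N <= \sum_(j in ~: Cset K r g k) Cap ord0 j)
  <-> (forall kk : 'I_g, \sum_(j | cls j == kk) Rt ord0 j <= \sum_(j | cls j != kk) Cap ord0 j).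
Proof.
have eq (kk : 'I_g) :
  (\sum_(i < K - r) at_nat Rt ((kk + i * g) %% K)%N = \sum_(j | cls j == kk) Rt ord0 j) /\
  (\sum_(j in ~: Cset K r g kk) Cap ord0 j = \sum_(j | cls j != kk) Cap ord0 j).
  rewrite sum_Cset Cset_cls; split; apply: eq_bigl => j; by rewrite !inE.
split.
  move=> h kk; have [<- <-] := eq kk; exact: h.
move=> h k kg; have [e1 e2] := eq (Ordinal kg); rewrite /= in e1 e2.
by rewrite e1 e2; exact: h.
Qed.

Local Open Scope classical_set_scope.
Lemma main_eq :
  capacity_region (side_info r g) Cap =
  [set Rt : 'rV[R]_K |
     (forall k, 0 <= Rt ord0 k) /\
     (forall k : nat, (k < g)%N ->
        \sum_(i < K - r) at_nat Rt ((k + i * g) %% K)%N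
        <= \sum_(j in ~: Cset K r g k) Cap ord0 j)].
Proof.
apply/seteqP; split => Rt /=.
  rewrite /capacity_region => /closure_approx cl.
  have nn : forall j, 0 <= Rt ord0 j.
    move=> j; rewrite leNgt; apply/negP => hj.
    have hj' : 0 < - Rt ord0 j by rewrite oppr_gt0.
    have [Rt' [[R0' _] hRt']] := cl (- Rt ord0 j) hj'.
    have := hRt' j; have := R0' j; move: hj.
    rewrite ltr_norml; lra.
  split => //; apply/region_iff => kk.
  rewrite leNgt; apply/negP => hlt.
  set SR := \sum_(j | cls j == kk) Rt ord0 j in hlt.
  set SC := \sum_(j | cls j != kk) Cap ord0 j in hlt.
  set e := (SR - SC) / (K%:R + 1).
  have K1 : 0 < K%:R + 1 :> R by rewrite ltr_wpDl ?ler0n.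
  have e0 : 0 < e by rewrite divr_gt0 // subr_gt0.
  have [Rt' [ach hRt']] := cl e e0.
  have hc := converse _ ach kk.
  have hsum : SR - \sum_(j | cls j == kk) Rt' ord0 j <= e * K%:R.
    rewrite /SR -sumrB.
    apply: (@le_trans _ _ (\sum_(j | cls j == kk) e)).
      apply: ler_sum => j _; have := hRt' j; rewrite ltr_norml; lra.
    rewrite sumr_const -[e *+ _]mulr_natr; apply: ler_wpM2l; first exact: ltW.
    rewrite ler_nat.
    by apply: leq_trans (max_card _) _; rewrite card_ord.
  have heK : e * K%:R < SR - SC.
    have -> : SR - SC = e * (K%:R + 1) by rewrite /e divfK // gt_eqF.
    by rewrite ltr_pM2l // ltrDl.
  rewrite -/SC in hc; lra.
case=> R0 /region_iff hreg.
apply/closure_approx => e e0; exact: approx.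
Qed.
End Main.

Local Open Scope classical_set_scope.
Local Open Scope ring_scope.

Theorem mainTheorem1 (R : realType) (K r : nat)
  (hK : (1 <= K)%N) (hr : (r < K)%N) (hdiv : ((K - r) %| K)%N)
  (Cap : 'rV[R]_K) (hCap : forall k, 0 <= Cap ord0 k) :
  let g := (K %/ (K - r))%N in
  capacity_region (side_info r g) Cap =
  [set Rt : 'rV[R]_K |
     (forall k, 0 <= Rt ord0 k) /\
     (forall k : nat, (k < g)%N ->
        \sum_(i < K - r) at_nat Rt ((k + i * g) %% K)%N
        <= \sum_(j in ~: Cset K r g k) Cap ord0 j)].
Proof. move=> g; exact: (@main_eq R K r hK hr hdiv Cap hCap). Qed.
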